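(* Let $(U,\Phi)$ be a one-dimensional quantum walk with one defect with an initial state $\Phi\in\mathcal H_0$. Then $(U,\Phi)$ is unitary equivalent to $(U_{r,\nu},\Phi_{\alpha,\theta})$ for some $0\le r_\varepsilon,\alpha\le1$ ($\varepsilon=\pm,0$) and $\nu_i,\theta\in\mathbb R$ ($i=1,2$), where $\Phi_{\alpha,\theta}=\alpha e_1^0+e^{i\theta}\sqrt{1-\alpha^2}\,e_2^0$ and \begin{align*} U_{r,\nu}={}&|e_1^{-1}\rangle\langle r_0e_1^0+e^{i\nu_1}s_0e_2^0|+|e_2^{1}\rangle\langle -e^{i\nu_2}s_0e_1^0+e^{i(\nu_1+\nu_2)}r_0e_2^0|\\ &+\sum_{n\in\mathbb Z\setminus\{0\}}|e_1^{n-1}\rangle\langle r_\pm e_1^n+s_\pm e_2^n|+|e_2^{n+1}\rangle\langle -s_\pm e_1^n+r_\pm e_2^n|, \end{align*} with $s_\varepsilon=\sqrt{1-r_\varepsilon^2}$, $r=(r_\pm,r_0)$, $\nu=(\nu_1,\nu_2)$. Moreover, for $0<r_\varepsilon,r'_\varepsilon,\alpha,\alpha'<1$ and $\nu_i,\nu'_i,\theta,\theta'\in[0,2\pi)$, $(U_{r,\nu},\Phi_{\alpha,\theta})$ and $(U_{r',\nu'},\Phi_{\alpha',\theta'})$ are unitary equivalent if and only if $r=r'$, $\nu=\nu'$, $\alpha=\alpha'$ and $\theta=\theta'$.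
   Context: Let $\mathcal H_n=\mathbb C^2$ for $n\in\mathbb Z$, $\mathcal H=\bigoplus_{n\in\mathbb Z}\mathcal H_n$, $P_n$ the orthogonal projection onto $\mathcal H_n$, and $\{e_1^n,e_2^n\}$ the standard basis of $\mathcal H_n$; each $\mathcal H_n$ is identified with $\mathbb C^2$. Dirac notation: $|x\rangle\langle y|$ is the operator $z\mapsto\langle y,z\rangle x$ (inner product conjugate-linear in the first argument). A one-dimensional quantum walk is a unitary $U$ on $\mathcal H$ with $\operatorname{rank}(P_nUP_m)=1$ if $m=n\pm1$ and $0$ otherwise. Every such $U$ can be written as $U=\sum_{n\in\mathbb Z}|\xi_{n-1,n}\rangle\langle\zeta_{n-1,n}|+|\xi_{n+1,n}\rangle\langle\zeta_{n+1,n}|$, where $\{\xi_{n,n+1},\xi_{n+1,n}\}_{n}$ and $\{\zeta_{n,n+1},\zeta_{n+1,n}\}_{n}$ are orthonormal bases of $\mathcal H$ with $\xi_{n,n+1},\zeta_{n+1,n}\in\mathcal H_n$ and $\xi_{n+1,n},\zeta_{n,n+1}\in\mathcal H_{n+1}$. $U$ is a one-dimensional quantum walk with one defect if it has such a representation for which there exist $\xi_1,\xi_2,\zeta_1,\zeta_2\in\mathbb C^2$ with $\xi_{n,n+1}=\xi_1$, $\xi_{n,n-1}=\xi_2$, $\zeta_{n-1,n}=\zeta_1$, $\zeta_{n+1,n}=\zeta_2$ for all $n\in\mathbb Z\setminus\{0\}$. An initial state is a unit vector $\Phi\in\mathcal H_0$. Since a walk $U$ is identified with $e^{i\lambda}U$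 and a state $\Phi$ with $e^{i\lambda}\Phi$, pairs $(U,\Phi)$ and $(U',\Phi')$ are called unitary equivalent if there exist $\lambda,\lambda'\in\mathbb R$ and a unitary $W=\bigoplus_nW_n$ ($W_n$ unitary on $\mathcal H_n$) with $e^{i\lambda}WUW^*=U'$ and $e^{i\lambda'}W\Phi=\Phi'$. *)

(* Defs.v *)
From HB Require Import structures.
From mathcomp Require Import all_boot all_order all_algebra.
From mathcomp Require Import all_classical all_reals.
From mathcomp Require Import trigo.
From mathcomp Require Import complex.
Set Implicit Arguments. Unset Strict Implicit. Unset Printing Implicit Defensive.
Import Order.TTheory GRing.Theory Num.Theory.
Local Open Scope ring_scope.

Section QW.
Variable R : realType.
Local Notation C := R[i].

(* vectors of H_n = C^2 are column vectors; operators H_m -> H_n are 2x2 matrices *)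
Definition vec := 'cV[C]_2.
Definition blk := 'M[C]_2.

Definition adj (m n : nat) (A : 'M[C]_(m, n)) : 'M[C]_(n, m) :=
  (map_mx (@conjc R) A)^T.

Definition ketbra (x y : vec) : blk := x *m adj y.

Definition e1 : vec := \col_(i < 2) (if i == 0 :> nat then 1 else 0).
Definition e2 : vec := \col_(i < 2) (if i == 1 :> nat then 1 else 0).

Definition expi (t : R) : C := (cos t +i* sin t)%C.
Definition rc (x : R) : C := (x%:C)%C.

Definition unit_vec (x : vec) : Prop := adj x *m x = 1%:M.
Definition onb2 (x y : vec) : Prop :=
  [/\ adj x *m x = 1%:M, adj y *m y = 1%:M & adj x *m y = 0].
Definition unitary2 (W : blk) : Prop :=
  adj W *m W = 1%:M /\ W *m adj W = 1%:M.

(* An operator U on H = (+)_{n in Z} C^2 whose blocks P_n U P_m vanish unless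
   |n - m| = 1 is given by its block matrix  B n m = P_n U P_m  (the entry
   (i,j) of B n m being <e_i^n, U e_j^m>).  Such a banded operator is unitary
   iff the block identities  U^*U = 1 = U U^*  hold (finite sums). *)
Definition op := int -> int -> blk.

Definition is_qw (B : op) : Prop :=
  [/\ (forall n m : int, (m = n + 1 \/ m = n - 1) -> \rank (B n m) = 1%N),
      (forall n m : int, m <> n + 1 -> m <> n - 1 -> B n m = 0),
      (forall n m : int,
         adj (B (n - 1) n) *m B (n - 1) m + adj (B (n + 1) n) *m B (n + 1) m
         = (if n == m then 1%:M else 0)) &
      (forall n m : int,
         B n (m - 1) *m adj (B m (m - 1)) + B n (m + 1) *m adj (B m (m + 1))
         = (if n == m then 1%:M else 0))].

(* U = sum_n |xi_{n-1,n}><zeta_{n-1,n}| + |xi_{n+1,n}><zeta_{n+1,n}| with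
   xiR n = xi_{n,n+1}, xiL n = xi_{n,n-1} (in H_n),
   zetaL n = zeta_{n-1,n}, zetaR n = zeta_{n+1,n} (in H_n). *)
Definition qw_rep (B : op) (xiR xiL zetaL zetaR : int -> vec) : Prop :=
  [/\ (forall n, onb2 (xiR n) (xiL n)),
      (forall n, onb2 (zetaL n) (zetaR n)) &
      (forall n m : int, B n m =
         (if m == n + 1 then ketbra (xiR n) (zetaL m) else 0) +
         (if m == n - 1 then ketbra (xiL n) (zetaR m) else 0))].

Definition one_defect_qw (B : op) : Prop :=
  is_qw B /\
  exists (xiR xiL zetaL zetaR : int -> vec) (xi1 xi2 zeta1 zeta2 : vec),
    qw_rep B xiR xiL zetaL zetaR /\
    forall n : int, n != 0 ->
      [/\ xiR n = xi1, xiL n = xi2, zetaL n = zeta1 & zetaR n = zeta2].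

Definition init_state (Phi : vec) : Prop := unit_vec Phi.

Definition unit_equiv (B : op) (Phi : vec) (B' : op) (Phi' : vec) : Prop :=
  exists (lam lam' : R) (W : int -> blk),
    (forall n, unitary2 (W n)) /\
    (forall n m : int, expi lam *: (W n *m B n m *m adj (W m)) = B' n m) /\
    expi lam' *: (W 0 *m Phi) = Phi'.

Definition sq (r : R) : R := Num.sqrt (1 - r ^+ 2).

Definition Phi_at (alpha theta : R) : vec :=
  rc alpha *: e1 + (expi theta * rc (sq alpha)) *: e2.

Definition U_rnu (rpm r0 nu1 nu2 : R) : op := fun n m =>
  (if m == n + 1 then
     (if m == 0 then ketbra e1 (rc r0 *: e1 + (expi nu1 * rc (sq r0)) *: e2)
      else ketbra e1 (rc rpm *: e1 + rc (sq rpm) *: e2))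
   else 0) +
  (if m == n - 1 then
     (if m == 0 then ketbra e2 ((- (expi nu2 * rc (sq r0))) *: e1
                                + (expi (nu1 + nu2) * rc r0) *: e2)
      else ketbra e2 ((- rc (sq rpm)) *: e1 + rc rpm *: e2))
   else 0).

End QW.

(* Main.v *)
Require Import Defs.
From HB Require Import structures.
From mathcomp Require Import all_boot all_order all_algebra.
From mathcomp Require Import all_classical all_reals.
From mathcomp Require Import trigo.
From mathcomp Require Import complex.
From mathcomp Require Import zify ring lra.
Import Order.TTheory GRing.Theory Num.Theory.
Local Open Scope ring_scope.
Set Implicit Arguments. Unset Strict Implicit. Unset Printing Implicit Defensive.

Section Aux.
Variable R : realType.
Local Notation C := R[i].

Lemma sum2 (F : 'I_2 -> C) : \sum_(i < 2) F i = F 0 + F 1.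
Proof. by rewrite big_ord_recr big_ord1; congr (F _ + F _); apply: val_inj. Qed.

Lemma ord2P (i : 'I_2) : i = 0 \/ i = 1.
Proof.
case: i => m Hi; case: m Hi => [|[|m]] Hi.
- by left; apply: val_inj.
- by right; apply: val_inj.
- by [].
Qed.

Definition cv2 (a b : C) : vec R := \col_(i < 2) (if i == 0 :> nat then a else b).
Definition m2 (a b c d : C) : blk R :=
  \matrix_(i < 2, j < 2) (if i == 0 :> nat then (if j == 0 :> nat then a else b)
                          else (if j == 0 :> nat then c else d)).

Lemma cv2_0 a b : cv2 a b 0 0 = a. Proof. by rewrite mxE. Qed.
Lemma cv2_1 a b : cv2 a b 1 0 = b. Proof. by rewrite mxE. Qed.

Lemma cv2E (v : vec R) : v = cv2 (v 0 0) (v 1 0).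
Proof.
apply/matrixP => i j; rewrite mxE (ord1 j).
by case: (ord2P i) => ->.
Qed.

Lemma m2E (A : blk R) : A = m2 (A 0 0) (A 0 1) (A 1 0) (A 1 1).
Proof.
by apply/matrixP => i j; rewrite mxE; case: (ord2P i) => ->; case: (ord2P j) => ->.
Qed.

Lemma cv2_inj a b c d : cv2 a b = cv2 c d -> a = c /\ b = d.
Proof.
move=> H; have E i : cv2 a b i 0 = cv2 c d i 0 by rewrite H.
by move: (E 0) (E 1); rewrite !mxE /= => -> ->.
Qed.

Lemma m2_inj a b c d a' b' c' d' : m2 a b c d = m2 a' b' c' d' ->
  [/\ a = a', b = b', c = c' & d = d'].
Proof.
move=> H.
have E i j : m2 a b c d i j = m2 a' b' c' d' i j by rewrite H.
by move: (E 0 0) (E 0 1) (E 1 0) (E 1 1); rewrite !mxE /= => -> -> -> ->.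
Qed.

Lemma e1E : e1 R = cv2 1 0.
Proof. by apply/matrixP => i j; rewrite !mxE; case: (ord2P i) => ->. Qed.
Lemma e2E : e2 R = cv2 0 1.
Proof. by apply/matrixP => i j; rewrite !mxE; case: (ord2P i) => ->. Qed.

Lemma cv2_add a b c d : cv2 a b + cv2 c d = cv2 (a + c) (b + d).
Proof. by apply/matrixP => i j; rewrite !mxE; case: (ord2P i) => ->. Qed.
Lemma cv2_scale k a b : k *: cv2 a b = cv2 (k * a) (k * b).
Proof. by apply/matrixP => i j; rewrite !mxE; case: (ord2P i) => ->. Qed.
Lemma m2_scale k a b c d : k *: m2 a b c d = m2 (k * a) (k * b) (k * c) (k * d).
Proof. by apply/matrixP => i j; rewrite !mxE; case: (ord2P i) => ->; case: (ord2P j) => ->. Qed.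
Lemma m2_0 : (0 : blk R) = m2 0 0 0 0.
Proof. by apply/matrixP => i j; rewrite !mxE; case: (ord2P i) => ->; case: (ord2P j) => ->. Qed.
Lemma m2_1 : (1%:M : blk R) = m2 1 0 0 1.
Proof. by apply/matrixP => i j; rewrite !mxE; case: (ord2P i) => ->; case: (ord2P j) => ->. Qed.
Lemma m2_add a b c d a' b' c' d' :
  m2 a b c d + m2 a' b' c' d' = m2 (a + a') (b + b') (c + c') (d + d').
Proof. by apply/matrixP => i j; rewrite !mxE; case: (ord2P i) => ->; case: (ord2P j) => ->. Qed.

Lemma m2_mulv a b c d x y : m2 a b c d *m cv2 x y = cv2 (a * x + b * y) (c * x + d * y).
Proof.
apply/matrixP => i j; rewrite !mxE sum2 !mxE; case: (ord2P i) => -> //.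
Qed.

Lemma m2_mul a b c d a' b' c' d' : m2 a b c d *m m2 a' b' c' d' =
  m2 (a * a' + b * c') (a * b' + b * d') (c * a' + d * c') (c * b' + d * d').
Proof.
apply/matrixP => i j; rewrite !mxE sum2 !mxE; case: (ord2P i) => ->; case: (ord2P j) => -> //.
Qed.

Lemma adj_m2 a b c d : adj (m2 a b c d) = m2 (conjc a) (conjc c) (conjc b) (conjc d).
Proof.
by apply/matrixP => i j; rewrite !mxE; case: (ord2P i) => ->; case: (ord2P j) => ->.
Qed.

Lemma ketbra_cv2 a b c d : ketbra (cv2 a b) (cv2 c d) =
  m2 (a * conjc c) (a * conjc d) (b * conjc c) (b * conjc d).
Proof.
apply/matrixP => i j; rewrite !mxE big_ord1 !mxE; case: (ord2P i) => ->; case: (ord2P j) => -> //.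
Qed.

Definition ip (x y : vec R) : C := conjc (x 0 0) * y 0 0 + conjc (x 1 0) * y 1 0.

Lemma adj_mul_vec (x y : vec R) : adj x *m y = (ip x y)%:M.
Proof.
apply/matrixP => i j; rewrite (ord1 i) (ord1 j) !mxE sum2 !mxE /ip /=. by rewrite mulr1n.
Qed.

Lemma scalar1_inj (a b : C) : (a%:M : 'M[C]_1) = b%:M -> a = b.
Proof. move=> H. have := congr1 (fun M : 'M[C]_1 => M 0 0) H. by rewrite !mxE. Qed.

End Aux.

Section Trig.
Variable R : realType.
Local Notation C := R[i].

Lemma expiD (s t : R) : expi (s + t) = expi s * expi t.
Proof. rewrite /expi cosD sinD /=. congr Complex; ring. Qed.

Lemma expi0 : expi (0 : R) = 1.
Proof. by rewrite /expi cos0 sin0. Qed.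

Lemma conj_expi (t : R) : conjc (expi t) = expi (- t).
Proof. by rewrite /expi cosN sinN. Qed.

Lemma expiN_mul (t : R) : expi t * expi (- t) = 1.
Proof. by rewrite -expiD subrr expi0. Qed.

Lemma expi_conj_mul (t : R) : expi t * conjc (expi t) = 1.
Proof. by rewrite conj_expi expiN_mul. Qed.

Lemma rcE (x : R) : rc x = (x +i* 0)%C. Proof. by []. Qed.

Lemma conj_rc (x : R) : conjc (rc x) = rc x.
Proof. by rewrite rcE /= oppr0. Qed.

Lemma rcM (x y : R) : rc (x * y) = rc x * rc y.
Proof. by rewrite /rc rmorphM. Qed.

Lemma rcD (x y : R) : rc (x + y) = rc x + rc y.
Proof. by rewrite /rc rmorphD. Qed.

Lemma rc1 : rc (1 : R) = 1. Proof. by []. Qed.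
Lemma rc0 : rc (0 : R) = 0. Proof. by []. Qed.

Lemma conjM (a b : C) : conjc (a * b) = conjc a * conjc b.
Proof. by case: a => a1 a2; case: b => b1 b2 /=; congr Complex; ring. Qed.

Lemma conjN (a : C) : conjc (- a) = - conjc a.
Proof. by case: a => a1 a2 /=. Qed.

Lemma conjD (a b : C) : conjc (a + b) = conjc a + conjc b.
Proof. by case: a => a1 a2; case: b => b1 b2 /=; congr Complex; ring. Qed.

Lemma conjK (a : C) : conjc (conjc a) = a.
Proof. by case: a => a1 a2 /=; rewrite opprK. Qed.

Lemma expi_surj (x y : R) : x ^+ 2 + y ^+ 2 = 1 -> exists t, expi t = (x +i* y)%C.
Proof.
move=> h.
have hx : -1 <= x <= 1.
  have : x ^+ 2 <= 1 by rewrite -h lerDl sqr_ge0.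
  by move=> H; apply/andP; split; nra.
have hs : Num.sqrt (1 - x ^+ 2) = `|y|.
  by rewrite -h addrC addKr sqrtr_sqr.
have hin : x \in `[(-1), 1] by rewrite in_itv /=.
case: (lerP 0 y) => hy.
- exists (acos x); rewrite /expi acosK // sin_acos // hs ger0_norm //.
- exists (- acos x); rewrite /expi cosN sinN acosK // sin_acos // hs ltr0_norm // opprK.
congr Complex. Qed.


Lemma unit_expi (z : C) : z * conjc z = 1 -> exists t, expi t = z.
Proof.
case: z => a b /= h.
apply: expi_surj.
case: h => h _; rewrite -h; ring.
Qed.

Lemma polar (z : C) : exists r t, 0 <= r /\ z = rc r * expi t.
Proof.
case: z => a b.
set r := Num.sqrt (a ^+ 2 + b ^+ 2).
have hr0 : 0 <= r by apply: sqrtr_ge0.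
have hr2 : r ^+ 2 = a ^+ 2 + b ^+ 2 by rewrite sqr_sqrtr // addr_ge0 // sqr_ge0.
case: (eqVneq r 0) => hr.
- exists 0, 0; split => //.
  have : a ^+ 2 + b ^+ 2 = 0 by rewrite -hr2 hr expr0n.
  move/eqP; rewrite paddr_eq0 ?sqr_ge0 // !sqrf_eq0 => /andP[/eqP -> /eqP ->].
  by rewrite expi0 mulr1.
- have [t ht] : exists t, expi t = ((a / r) +i* (b / r))%C.
    apply: expi_surj. rewrite !expr_div_n -mulrDl -hr2 divff // expf_neq0 //.
  exists r, t; split => //.
  rewrite ht rcE /=; congr Complex; field; exact: hr.
Qed.

Lemma polar_sq (r t : R) : (rc r * expi t) * conjc (rc r * expi t) = rc (r ^+ 2).
Proof.
rewrite !rcE /expi /=; congr Complex.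
- by rewrite -[in RHS](mulr1 (r ^+ 2)) -(cos2Dsin2 t); ring.
- ring.
Qed.

Lemma eq_rc_expi (X r r' : R) : 0 < r -> 0 < r' -> expi X * rc r = rc r' ->
  r = r' /\ expi X = 1.
Proof.
move=> hr hr'; rewrite /expi !rcE /= => -[h1 h2].
have hs : sin X = 0.
  by apply: (mulIf (lt0r_neq0 hr)); rewrite mul0r -h2; ring.
have hc : cos X = 1.
  have := cos2Dsin2 X; rewrite hs expr0n addr0 /= => /eqP.
  rewrite sqrf_eq1 => /orP[/eqP //|/eqP hc].
  by move: h1; rewrite hc hs; lra.
by split; [move: h1; rewrite hc hs; lra | rewrite hc hs].
Qed.

Lemma cos_eq1 (d : R) : 0 <= d < pi *+ 2 -> cos d = 1 -> d = 0.
Proof.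
move=> /andP[d0 d2] hc.
have p0 := pi_gt0 R.
case: (lerP d pi) => hd.
- apply: (@cos_inj R); rewrite ?in_itv /= ?d0 ?hd ?cos0 //.
  by rewrite (ltW p0) lexx.
- have : pi *+ 2 - d = 0.
    apply: (@cos_inj R); rewrite ?in_itv /= ?cos0 //.
    + apply/andP; split; lra.
    + by rewrite (ltW p0) lexx.
    + by rewrite cosB cos2pi sin2pi hc; ring.
  lra.
Qed.

Lemma expi_inj (s t : R) : 0 <= s < pi *+ 2 -> 0 <= t < pi *+ 2 ->
  expi s = expi t -> s = t.
Proof.
move=> hs ht [hc hsn].
have hcd : cos (s - t) = 1 by rewrite cosB hc hsn -[RHS](cos2Dsin2 t); ring.
have hcd' : cos (t - s) = 1 by rewrite cosB hc hsn -[RHS](cos2Dsin2 t); ring.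
case: (lerP t s) => h.
- have := @cos_eq1 (s - t); move: hs ht => /andP[? ?] /andP[? ?].
  move=> /(_ _ hcd) => H. apply/eqP; rewrite -subr_eq0; apply/eqP; apply: H.
  apply/andP; split; lra.
- have := @cos_eq1 (t - s); move: hs ht => /andP[? ?] /andP[? ?].
  move=> /(_ _ hcd') => H. apply/eqP; rewrite eq_sym -subr_eq0; apply/eqP; apply: H.
  apply/andP; split; lra.
Qed.

End Trig.
Section Mat.
Variable R : realType.
Local Notation C := R[i].

Lemma adjM m n p (A : 'M[C]_(m, n)) (B : 'M[C]_(n, p)) : adj (A *m B) = adj B *m adj A.
Proof. by rewrite /adj map_mxM trmx_mul. Qed.

Lemma adjK m n (A : 'M[C]_(m, n)) : adj (adj A) = A.
Proof. by apply/matrixP => i j; rewrite !mxE conjcK. Qed.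

Lemma ketbra_conj (W W' : blk R) (x y : vec R) :
  W *m ketbra x y *m adj W' = ketbra (W *m x) (W' *m y).
Proof. by rewrite /ketbra adjM !mulmxA. Qed.

Lemma ip_cv2 (a b c d : C) : ip (cv2 a b) (cv2 c d) = conjc a * c + conjc b * d.
Proof. by rewrite /ip !mxE. Qed.

Lemma unitary_ip (W : blk R) (v w : vec R) : unitary2 W -> ip (W *m v) (W *m w) = ip v w.
Proof.
case=> h1 _; apply: scalar1_inj; rewrite -!adj_mul_vec adjM.
by rewrite -mulmxA (mulmxA (adj W)) h1 mul1mx.
Qed.

Lemma onb2_ip (x y : vec R) : onb2 x y -> [/\ ip x x = 1, ip y y = 1 & ip x y = 0].
Proof.
case=> h1 h2 h3; split; apply: scalar1_inj; rewrite -adj_mul_vec.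
- exact: h1.
- exact: h2.
- by rewrite h3 raddf0.
Qed.

Lemma unit_vec_ip (x : vec R) : unit_vec x -> ip x x = 1.
Proof. by move=> h; apply: scalar1_inj; rewrite -adj_mul_vec; exact: h. Qed.

Lemma ketbra_scale_eq (L a b c d aa bb cc dd : C) :
  L *: ketbra (cv2 a b) (cv2 c d) = ketbra (cv2 aa bb) (cv2 cc dd) ->
  [/\ L * (a * conjc c) = aa * conjc cc, L * (a * conjc d) = aa * conjc dd,
      L * (b * conjc c) = bb * conjc cc & L * (b * conjc d) = bb * conjc dd].
Proof. by rewrite !ketbra_cv2 m2_scale => /m2_inj. Qed.

End Mat.

Section Uniq.
Variable R : realType.
Local Notation C := R[i].

Lemma mulv_cv2 (W : blk R) x y :
  W *m cv2 x y = cv2 (W 0 0 * x + W 0 1 * y) (W 1 0 * x + W 1 1 * y).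
Proof. by rewrite {1}(m2E W) m2_mulv. Qed.

Lemma expi_neq0 (t : R) : expi t != 0.
Proof. by apply/eqP => h; have := expiN_mul t; rewrite h mul0r => /eqP; rewrite eq_sym oner_eq0. Qed.

Lemma kill (e w v0 v1 : C) : e != 0 -> conjc v0 * v0 + conjc v1 * v1 = 1 ->
  e * (w * conjc v0) = 0 -> e * (w * conjc v1) = 0 -> w = 0.
Proof.
move=> he hv h0 h1.
have : e * w = 0.
  have -> : e * w = (e * (w * conjc v0)) * v0 + (e * (w * conjc v1)) * v1.
    by rewrite -[LHS]mulr1 -hv; ring.
  by rewrite h0 h1 !mul0r addr0.
by move/eqP; rewrite mulf_eq0 (negbTE he) /= => /eqP.
Qed.

Lemma kill10 (L : R) (W W' : blk R) (z z' : vec R) :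
  unitary2 W' -> ip z z = 1 ->
  expi L *: (W *m ketbra (e1 R) z *m adj W') = ketbra (e1 R) z' -> W 1 0 = 0.
Proof.
move=> hW hz.
have hv := unitary_ip z z hW; rewrite hz in hv.
rewrite ketbra_conj; move: hv; rewrite (cv2E (W' *m z)) ip_cv2 => hv.
rewrite (cv2E z') e1E mulv_cv2 => /ketbra_scale_eq [_ _ h3 h4].
move: h3 h4; rewrite !mul0r mulr1 mulr0 addr0 => h3 h4.
exact: (kill (expi_neq0 L) hv h3 h4).
Qed.

Lemma kill01 (L : R) (W W' : blk R) (z z' : vec R) :
  unitary2 W' -> ip z z = 1 ->
  expi L *: (W *m ketbra (e2 R) z *m adj W') = ketbra (e2 R) z' -> W 0 1 = 0.
Proof.
move=> hW hz.
have hv := unitary_ip z z hW; rewrite hz in hv.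
rewrite ketbra_conj; move: hv; rewrite (cv2E (W' *m z)) ip_cv2 => hv.
rewrite (cv2E z') e2E mulv_cv2 => /ketbra_scale_eq [h3 h4 _ _].
move: h3 h4; rewrite !mul0r mulr1 mulr0 add0r => h3 h4.
exact: (kill (expi_neq0 L) hv h3 h4).
Qed.

Lemma diag_form (W : blk R) : unitary2 W -> W 1 0 = 0 -> W 0 1 = 0 ->
  exists a b : R, W = m2 (expi a) 0 0 (expi b).
Proof.
case=> _ h h10 h01.
move: h; rewrite (m2E W) adj_m2 m2_mul m2_1 h10 h01 => /m2_inj [h00 _ _ h11].
move: h00 h11; rewrite conjc0 !mulr0 addr0 add0r => h00 h11.
have [a ha] := unit_expi h00.
have [b hb] := unit_expi h11.
by exists a, b; rewrite ha hb.
Qed.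

Definition zL (r r0 n1 : R) (m : int) : vec R :=
  if m == 0 then cv2 (rc r0) (expi n1 * rc (sq r0)) else cv2 (rc r) (rc (sq r)).
Definition zR (r r0 n1 n2 : R) (m : int) : vec R :=
  if m == 0 then cv2 (- (expi n2 * rc (sq r0))) (expi (n1 + n2) * rc r0)
  else cv2 (- rc (sq r)) (rc r).

Lemma U_up r r0 n1 n2 (n m : int) : m = n + 1 ->
  U_rnu r r0 n1 n2 n m = ketbra (e1 R) (zL r r0 n1 m).
Proof.
move=> ->; rewrite /U_rnu /zL eqxx.
have -> : (n + 1 == n - 1) = false by apply/eqP; lia.
rewrite addr0 e1E e2E !cv2_scale !cv2_add !mulr0 !mulr1 !addr0 !add0r.
by case: (n + 1 == 0).
Qed.

Lemma U_dn r r0 n1 n2 (n m : int) : m = n - 1 ->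
  U_rnu r r0 n1 n2 n m = ketbra (e2 R) (zR r r0 n1 n2 m).
Proof.
move=> ->; rewrite /U_rnu /zR eqxx.
have -> : (n - 1 == n + 1) = false by apply/eqP; lia.
rewrite add0r e1E e2E !cv2_scale !cv2_add !mulr0 !mulr1 !addr0 !add0r.
by case: (n - 1 == 0).
Qed.

Lemma sq_sqr (r : R) : 0 <= r <= 1 -> sq r ^+ 2 = 1 - r ^+ 2.
Proof.
move=> /andP[h0 h1]; rewrite /sq sqr_sqrtr // subr_ge0.
by rewrite expr_le1.
Qed.

Lemma sq_ge0 (r : R) : 0 <= sq r. Proof. exact: sqrtr_ge0. Qed.

Lemma sq_gt0 (r : R) : 0 <= r < 1 -> 0 < sq r.
Proof.
move=> /andP[h0 h1]; rewrite /sq sqrtr_gt0 subr_gt0.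
by rewrite expr_lt1.
Qed.

Lemma ip_rc_expi (x y : R) (t : R) :
  conjc (expi t * rc x) * (expi t * rc y) = rc (x * y).
Proof.
rewrite conjM conj_rc conj_expi.
by rewrite [LHS](_ : _ = (expi t * expi (- t)) * (rc x * rc y)); [rewrite expiN_mul mul1r rcM | ring].
Qed.

Lemma ip_rc (x y : R) : conjc (rc x) * rc y = rc (x * y).
Proof. by rewrite conj_rc rcM. Qed.

Lemma zL_unit r r0 n1 m : 0 <= r <= 1 -> 0 <= r0 <= 1 ->
  ip (zL r r0 n1 m) (zL r r0 n1 m) = 1.
Proof.
move=> hr hr0; rewrite /zL; case: (m == 0); rewrite ip_cv2.
- by rewrite ip_rc ip_rc_expi -rcD -!expr2 sq_sqr // addrC subrK.
- by rewrite !ip_rc -rcD -!expr2 sq_sqr // addrC subrK.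
Qed.

Lemma zR_unit r r0 n1 n2 m : 0 <= r <= 1 -> 0 <= r0 <= 1 ->
  ip (zR r r0 n1 n2 m) (zR r r0 n1 n2 m) = 1.
Proof.
move=> hr hr0; rewrite /zR; case: (m == 0); rewrite ip_cv2.
- by rewrite conjN mulrNN ip_rc_expi ip_rc_expi -rcD -!expr2 sq_sqr // subrK.
- by rewrite conjN mulrNN !ip_rc -rcD -!expr2 sq_sqr // subrK.
Qed.

End Uniq.

Section Uniq2.
Variable R : realType.
Local Notation C := R[i].

Lemma conj_eq (x y : C) : conjc x = conjc y -> x = y.
Proof. by move=> h; rewrite -(conjK x) h conjK. Qed.

Lemma block_up (L a b a' b' : R) (z z' : vec R) :
  expi L *: (m2 (expi a) 0 0 (expi b) *m ketbra (e1 R) z *m adj (m2 (expi a') 0 0 (expi b')))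
    = ketbra (e1 R) z' ->
  expi (- L - a + a') * z 0 0 = z' 0 0 /\ expi (- L - a + b') * z 1 0 = z' 1 0.
Proof.
rewrite ketbra_conj (cv2E z) (cv2E z') e1E !m2_mulv ?cv2_0 ?cv2_1.
move=> /ketbra_scale_eq [h1 h2 _ _]; move: h1 h2.
rewrite !mulr1 !mulr0 !mul0r !addr0 !add0r !mul1r => h1 h2.
split; apply: conj_eq.
- by rewrite -h1 !expiD !conjM !conj_expi !opprK; ring.
- by rewrite -h2 !expiD !conjM !conj_expi !opprK; ring.
Qed.

Lemma block_dn (L a b a' b' : R) (z z' : vec R) :
  expi L *: (m2 (expi a) 0 0 (expi b) *m ketbra (e2 R) z *m adj (m2 (expi a') 0 0 (expi b')))
    = ketbra (e2 R) z' ->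
  expi (- L - b + a') * z 0 0 = z' 0 0 /\ expi (- L - b + b') * z 1 0 = z' 1 0.
Proof.
rewrite ketbra_conj (cv2E z) (cv2E z') e2E !m2_mulv ?cv2_0 ?cv2_1.
move=> /ketbra_scale_eq [_ _ h1 h2]; move: h1 h2.
rewrite !mulr1 !mulr0 !mul0r !addr0 !add0r !mul1r => h1 h2.
split; apply: conj_eq.
- by rewrite -h1 !expiD !conjM !conj_expi !opprK; ring.
- by rewrite -h2 !expiD !conjM !conj_expi !opprK; ring.
Qed.

Lemma phi_eq (L a b : R) (v v' : vec R) :
  expi L *: (m2 (expi a) 0 0 (expi b) *m v) = v' ->
  expi (L + a) * v 0 0 = v' 0 0 /\ expi (L + b) * v 1 0 = v' 1 0.
Proof.
rewrite (cv2E v) (cv2E v') m2_mulv cv2_scale ?cv2_0 ?cv2_1 => /cv2_inj [h1 h2].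
by rewrite !expiD -h1 -h2; split; ring.
Qed.

Lemma zL0 (r r0 n1 : R) : zL r r0 n1 0 = cv2 (rc r0) (expi n1 * rc (sq r0)).
Proof. by rewrite /zL eqxx. Qed.
Lemma zLn (r r0 n1 : R) m : m != 0 -> zL r r0 n1 m = cv2 (rc r) (rc (sq r)).
Proof. by rewrite /zL => /negbTE ->. Qed.
Lemma zR0 (r r0 n1 n2 : R) : zR r r0 n1 n2 0 = cv2 (- (expi n2 * rc (sq r0))) (expi (n1 + n2) * rc r0).
Proof. by rewrite /zR eqxx. Qed.
Lemma zRn (r r0 n1 n2 : R) m : m != 0 -> zR r r0 n1 n2 m = cv2 (- rc (sq r)) (rc r).
Proof. by rewrite /zR => /negbTE ->. Qed.

Lemma shape2 (X u u' s s' : R) : expi X * (expi u * rc s) = expi u' * rc s' ->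
  expi (X + u - u') * rc s = rc s'.
Proof.
move=> h.
have -> : rc s' = expi (- u') * (expi u' * rc s').
  by rewrite mulrA (mulrC (expi (- u'))) expiN_mul mul1r.
by rewrite -h !expiD; ring.
Qed.

Lemma shapeN (X : R) (z z' : C) : expi X * - z = - z' -> expi X * z = z'.
Proof. by rewrite mulrN => /oppr_inj. Qed.

Lemma expi1D (X Y : R) : expi X = 1 -> expi Y = 1 -> expi (X + Y) = 1.
Proof. by move=> h1 h2; rewrite expiD h1 h2 mulr1. Qed.
Lemma expi1N (X : R) : expi X = 1 -> expi (- X) = 1.
Proof. by move=> h; have := expiN_mul X; rewrite h mul1r. Qed.
Lemma expi1_eq (X Y : R) : expi (X - Y) = 1 -> expi X = expi Y.
Proof. by move=> h; rewrite -[X](subrK Y) expiD h mul1r. Qed.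

Lemma pos_bounds (r : R) : 0 < r < 1 -> 0 <= r <= 1.
Proof. by move=> /andP[h1 h2]; rewrite ltW // ltW. Qed.
Lemma pos_bounds' (r : R) : 0 < r < 1 -> 0 <= r < 1.
Proof. by move=> /andP[h1 h2]; rewrite ltW // h2. Qed.

Lemma two_pi (x : R) : 0 <= x < 2 * pi -> 0 <= x < pi *+ 2.
Proof. by rewrite mulr_natl. Qed.

Lemma uniq_dir (r r0 n1 n2 al th r' r0' n1' n2' al' th' : R) :
  0 < r < 1 -> 0 < r0 < 1 -> 0 < al < 1 ->
  0 < r' < 1 -> 0 < r0' < 1 -> 0 < al' < 1 ->
  0 <= n1 < 2 * pi -> 0 <= n2 < 2 * pi -> 0 <= th < 2 * pi ->
  0 <= n1' < 2 * pi -> 0 <= n2' < 2 * pi -> 0 <= th' < 2 * pi ->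
  unit_equiv (U_rnu r r0 n1 n2) (Phi_at al th) (U_rnu r' r0' n1' n2') (Phi_at al' th') ->
  [/\ r = r', r0 = r0', n1 = n1', n2 = n2' & (al = al' /\ th = th')].
Proof.
move=> hr hr0 hal hr' hr0' hal' hn1 hn2 hth hn1' hn2' hth'.
case=> L [L' [W [hW [hB hP]]]].
have k10 m : W m 1 0 = 0.
  have := hB m (m + 1); rewrite !(U_up _ _ _ _ (erefl (m + 1))).
  apply: kill10 (hW _) _; exact: zL_unit (pos_bounds hr) (pos_bounds hr0).
have k01 m : W m 0 1 = 0.
  have := hB m (m - 1); rewrite !(U_dn _ _ _ _ (erefl (m - 1))).
  apply: kill01 (hW _) _; exact: zR_unit (pos_bounds hr) (pos_bounds hr0).
have [am1 [bm1 Wm1]] := diag_form (hW (-1)) (k10 _) (k01 _).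
have [a0 [b0 W0]] := diag_form (hW 0) (k10 _) (k01 _).
have [a1 [b1 W1]] := diag_form (hW 1) (k10 _) (k01 _).
have [a2 [b2 W2]] := diag_form (hW 2) (k10 _) (k01 _).
have B1 := hB (-1) 0; rewrite !(U_up _ _ _ _ (m := 0) (n := -1)) // Wm1 W0 in B1.
have B2 := hB 0 1; rewrite !(U_up _ _ _ _ (m := 1) (n := 0)) // W0 W1 in B2.
have B3 := hB 1 2; rewrite !(U_up _ _ _ _ (m := 2) (n := 1)) // W1 W2 in B3.
have B4 := hB 0 (-1); rewrite !(U_dn _ _ _ _ (m := -1) (n := 0)) // Wm1 W0 in B4.
have B5 := hB 1 0; rewrite !(U_dn _ _ _ _ (m := 0) (n := 1)) // W0 W1 in B5.
have B6 := hB 2 1; rewrite !(U_dn _ _ _ _ (m := 1) (n := 2)) // W1 W2 in B6.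
move: B1 => /block_up []; rewrite !zL0 ?cv2_0 ?cv2_1.
move=> /eq_rc_expi - /(_ (andP hr0).1 (andP hr0').1) [er0 F1] /shape2 F2.
move: B2 => /block_up []; rewrite !zLn // ?cv2_0 ?cv2_1.
move=> /eq_rc_expi - /(_ (andP hr).1 (andP hr').1) [er F3].
move=> /eq_rc_expi - /(_ (sq_gt0 (pos_bounds' hr)) (sq_gt0 (pos_bounds' hr'))) [_ F4].
move: B3 => /block_up [] _; rewrite !zLn // ?cv2_0 ?cv2_1.
move=> /eq_rc_expi - /(_ (sq_gt0 (pos_bounds' hr)) (sq_gt0 (pos_bounds' hr'))) [_ F6].
move: B4 => /block_dn [] + _; rewrite !zRn // ?cv2_0 ?cv2_1.
move=> /shapeN /eq_rc_expi - /(_ (sq_gt0 (pos_bounds' hr)) (sq_gt0 (pos_bounds' hr'))) [_ F7].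
move: B5 => /block_dn [] + _; rewrite !zR0 ?cv2_0 ?cv2_1.
move=> /shapeN /shape2 F8.
move: B6 => /block_dn [] + _; rewrite !zRn // ?cv2_0 ?cv2_1.
move=> /shapeN /eq_rc_expi - /(_ (sq_gt0 (pos_bounds' hr)) (sq_gt0 (pos_bounds' hr'))) [_ F9].
move: hP; rewrite W0 /Phi_at e1E e2E !cv2_scale !cv2_add !mulr0 !mulr1 !addr0 !add0r.
move=> /phi_eq []; rewrite ?cv2_0 ?cv2_1.
move=> /eq_rc_expi - /(_ (andP hal).1 (andP hal').1) [eal G1].
subst r' r0' al'.
move: F2 F8 => /eq_rc_expi - /(_ (sq_gt0 (pos_bounds' hr0)) (sq_gt0 (pos_bounds' hr0))) [_ F2].
move=> /eq_rc_expi - /(_ (sq_gt0 (pos_bounds' hr0)) (sq_gt0 (pos_bounds' hr0))) [_ F8].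
move=> /shape2 /eq_rc_expi - /(_ (sq_gt0 (pos_bounds' hal)) (sq_gt0 (pos_bounds' hal))) [_ G2].
have E2L : expi (- (L + L)) = 1.
  rewrite (_ : - (L + L) = (- L - b2 + a1) + (- L - a1 + b2)); last by ring.
  exact: expi1D.
have e1 : n1 = n1'.
  apply: (expi_inj (two_pi hn1) (two_pi hn1')); apply: expi1_eq.
  rewrite (_ : n1 - n1' = ((- L - am1 + b0) + n1 - n1') + (- L - b0 + am1) + - (- (L + L))); last by ring.
  by apply: expi1D; [apply: expi1D|apply: expi1N].
have e2 : n2 = n2'.
  apply: (expi_inj (two_pi hn2) (two_pi hn2')); apply: expi1_eq.
  rewrite (_ : n2 - n2' = ((- L - b1 + a0) + n2 - n2') + (- L - a0 + b1) + - (- (L + L))); last by ring.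
  by apply: expi1D; [apply: expi1D|apply: expi1N].
have e3 : th = th'.
  apply: (expi_inj (two_pi hth) (two_pi hth')); apply: expi1_eq.
  rewrite (_ : th - th' = (L' + b0 + th - th') + - (L' + a0) + ((- L - am1 + a0) + (- L - b0 + am1)) + - (- (L + L))); last by ring.
  apply: expi1D; [apply: expi1D; [apply: expi1D; [by []|exact: expi1N]|exact: expi1D]|exact: expi1N].
by [].
Qed.

End Uniq2.

Section Exist1.
Variable R : realType.
Local Notation C := R[i].

Lemma uniq_rev (B : op R) (Phi : vec R) : unit_equiv B Phi B Phi.
Proof.
have a1 : adj (1%:M : blk R) = 1%:M by rewrite m2_1 adj_m2 conjc0 conjc1.
exists 0, 0, (fun _ => 1%:M); split; [|split].
- by move=> n; split; rewrite a1 mul1mx.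
- by move=> n m; rewrite expi0 scale1r a1 mul1mx mulmx1.
- by rewrite expi0 scale1r mul1mx.
Qed.

Definition Wmat (p q : C) (x y : vec R) : blk R :=
  m2 (p * conjc (x 0 0)) (p * conjc (x 1 0)) (q * conjc (y 0 0)) (q * conjc (y 1 0)).

Lemma Wmat_mul p q x y v : Wmat p q x y *m v = cv2 (p * ip x v) (q * ip y v).
Proof. by rewrite {1}(cv2E v) m2_mulv /ip; congr cv2; ring. Qed.

Lemma ip_conj (x y : vec R) : conjc (ip x y) = ip y x.
Proof. by rewrite /ip conjD !conjM !conjK; ring. Qed.

Lemma Wmat_unitary p q x y : p * conjc p = 1 -> q * conjc q = 1 -> onb2 x y ->
  unitary2 (Wmat p q x y).
Proof.
move=> hp hq /onb2_ip [hx hy hxy].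
have hyx : ip y x = 0 by rewrite -ip_conj hxy conjc0.
have h : Wmat p q x y *m adj (Wmat p q x y) = 1%:M.
  rewrite /Wmat adj_m2 m2_mul m2_1 !conjM !conjK; congr m2.
  - by rewrite -[RHS]hp -[RHS]mulr1 -hx /ip; ring.
  - by rewrite -[RHS](mulr0 (p * conjc q)) -hxy /ip; ring.
  - by rewrite -[RHS](mulr0 (q * conjc p)) -hyx /ip; ring.
  - by rewrite -[RHS]hq -[RHS]mulr1 -hy /ip; ring.
by split => //; apply: mulmx1C.
Qed.

Lemma parseval (x y v w : vec R) : onb2 x y ->
  ip v w = conjc (ip x v) * ip x w + conjc (ip y v) * ip y w.
Proof.
move=> h.
have e : (1 : C) * conjc 1 = 1 by rewrite conjc1 mulr1.
have hu := Wmat_unitary e e h.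
by rewrite -(unitary_ip v w hu) !Wmat_mul ip_cv2 !mul1r.
Qed.

Lemma rc_inj (x y : R) : rc x = rc y -> x = y.
Proof. by case. Qed.

Lemma polar2 (a b : C) : conjc a * a + conjc b * b = 1 ->
  exists ra ta tb, [/\ 0 <= ra <= 1, a = rc ra * expi ta & b = rc (sq ra) * expi tb].
Proof.
move=> h.
have [ra [ta [hra ea]]] := polar a.
have [rb [tb [hrb eb]]] := polar b.
have hs : ra ^+ 2 + rb ^+ 2 = 1.
  have ha2 : rc (ra ^+ 2) = a * conjc a by rewrite ea polar_sq.
  have hb2 : rc (rb ^+ 2) = b * conjc b by rewrite eb polar_sq.
  by apply: rc_inj; rewrite rcD ha2 hb2 rc1 -h; ring.
have hsq : sq ra = rb.
  by rewrite /sq -hs addrC addKr sqrtr_sqr ger0_norm.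
exists ra, ta, tb; split => //; last by rewrite hsq.
by rewrite hra /=; nra.
Qed.

Lemma coords (x y z w : vec R) : onb2 x y -> onb2 z w ->
  exists ra ta tb tk, [/\ 0 <= ra <= 1, ip x z = rc ra * expi ta,
    ip y z = rc (sq ra) * expi tb,
    ip x w = - (rc (sq ra) * expi (- tb)) * expi tk &
    ip y w = rc ra * expi (- ta) * expi tk].
Proof.
move=> hxy hzw.
have [hz hw hzw'] := onb2_ip hzw.
set a := ip x z; set b := ip y z; set c := ip x w; set d := ip y w.
have h1 : conjc a * a + conjc b * b = 1 by rewrite -hz (parseval z z hxy).
have h2 : conjc c * c + conjc d * d = 1 by rewrite -hw (parseval w w hxy).
have h3 : conjc a * c + conjc b * d = 0 by rewrite -hzw' (parseval z w hxy).
set k := a * d - b * c.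
have hc : c = - conjc b * k.
  have -> : c = a * (conjc a * c) + conjc b * b * c.
    by rewrite -[LHS]mulr1 -h1; ring.
  have -> : conjc a * c = - (conjc b * d) by apply/eqP; rewrite -subr_eq0 opprK h3.
  rewrite /k; ring.
have hd : d = conjc a * k.
  have -> : d = conjc a * a * d + b * (conjc b * d).
    by rewrite -[LHS]mulr1 -h1; ring.
  have -> : conjc b * d = - (conjc a * c) by apply/eqP; rewrite -subr_eq0 opprK addrC h3.
  rewrite /k; ring.
have hk : k * conjc k = 1.
  rewrite -h2 hc hd !conjM conjN !conjK -[LHS]mulr1 -h1; ring.
have [tk etk] := unit_expi hk.
have [ra [ta [tb [hra ea eb]]]] := polar2 h1.
exists ra, ta, tb, tk; split => //.
- by rewrite hc -etk eb conjM conj_rc conj_expi.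
- by rewrite hd -etk ea conjM conj_rc conj_expi.
Qed.

Lemma ketbra_up_eq (L A : R) (x y z0 z1 : C) :
  z0 = expi (- L) * expi (- A) * x -> z1 = expi (- L) * expi (- A) * y ->
  expi L *: ketbra (cv2 (expi A) 0) (cv2 x y) = ketbra (cv2 1 0) (cv2 z0 z1).
Proof.
move=> -> ->; rewrite !ketbra_cv2 m2_scale !conjM !conj_expi !mul0r !mulr0 !mul1r.
rewrite !opprK.
have e := expiN_mul L; have e' := expiN_mul A.
by congr m2; rewrite mulrA.
Qed.

Lemma ketbra_dn_eq (L A : R) (x y z0 z1 : C) :
  z0 = expi (- L) * expi (- A) * x -> z1 = expi (- L) * expi (- A) * y ->
  expi L *: ketbra (cv2 0 (expi A)) (cv2 x y) = ketbra (cv2 0 1) (cv2 z0 z1).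
Proof.
move=> -> ->; rewrite !ketbra_cv2 m2_scale !conjM !conj_expi !mul0r !mulr0 !mul1r.
rewrite !opprK.
have e := expiN_mul L; have e' := expiN_mul A.
by congr m2; rewrite mulrA.
Qed.

End Exist1.

Section Exist2.
Variable R : realType.
Local Notation C := R[i].

Definition Pang (lam ta tb ta0 : R) (n : int) : R :=
  if n == 0 then tb - ta0
  else if 0 < n then n%:~R * (lam - ta) + (tb - ta0)
  else n%:~R * (lam - ta) - (ta - tb).
Definition Qang (lam ta tb ta0 : R) (n : int) : R :=
  if n == 0 then 0 else (ta - tb) + Pang lam ta tb ta0 n.

Lemma Pang0 lam ta tb ta0 : Pang lam ta tb ta0 0 = tb - ta0.
Proof. by rewrite /Pang eqxx. Qed.
Lemma Qang0 lam ta tb ta0 : Qang lam ta tb ta0 0 = 0.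
Proof. by rewrite /Qang eqxx. Qed.
Lemma Qangn lam ta tb ta0 n : n != 0 -> Qang lam ta tb ta0 n = (ta - tb) + Pang lam ta tb ta0 n.
Proof. by rewrite /Qang => /negbTE ->. Qed.

Lemma Pstep lam ta tb ta0 (n : int) : n + 1 != 0 ->
  Pang lam ta tb ta0 (n + 1) = Pang lam ta tb ta0 n + (lam - ta).
Proof.
move=> hn; rewrite /Pang (negbTE hn).
have [h|[h|h]] : n = 0 \/ 0 < n \/ n + 1 < 0 by lia.
- by rewrite h eqxx /= add0r; ring.
- have -> : (n == 0) = false by apply/eqP; lia.
  have -> : (0 < n + 1) = true by lia.
  by rewrite h intrD; ring.
- have -> : (n == 0) = false by apply/eqP; lia.
  have -> : (0 < n + 1) = false by lia.
  have -> : (0 < n) = false by lia.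
  by rewrite intrD; ring.
Qed.

Lemma Pm1 lam ta tb ta0 : Pang lam ta tb ta0 (-1) = - (lam - ta) - (ta - tb).
Proof.
rewrite /Pang.
have -> : ((-1 : int) == 0) = false by [].
have -> : ((0 : int) < -1) = false by [].
have -> : ((-1 : int)%:~R : R) = -1 by rewrite intrN.
ring.
Qed.

Lemma comb_up (a1 a2 a3 a4 r : R) :
  expi a1 * expi a2 * (expi a3 * (rc r * expi a4)) = expi (a1 + a2 + a3 + a4) * rc r.
Proof. by rewrite !expiD; ring. Qed.
Lemma comb_c (a1 a2 a3 b1 b2 r : R) :
  expi a1 * expi a2 * (expi a3 * (- (rc r * expi b1) * expi b2)) =
  - (expi (a1 + a2 + a3 + b1 + b2) * rc r).
Proof. by rewrite !expiD; ring. Qed.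
Lemma comb_d (a1 a2 a3 b1 b2 r : R) :
  expi a1 * expi a2 * (expi a3 * (rc r * expi b1 * expi b2)) =
  expi (a1 + a2 + a3 + b1 + b2) * rc r.
Proof. by rewrite !expiD; ring. Qed.

Lemma ang0 (X : R) (z : C) : X = 0 -> z = expi X * z.
Proof. by move=> ->; rewrite expi0 mul1r. Qed.

End Exist2.

Section Exist3.
Variable R : realType.
Local Notation C := R[i].

Theorem exist_dir (B : op R) (Phi : vec R) :
  one_defect_qw B -> init_state Phi ->
  exists rpm r0 alpha nu1 nu2 theta : R,
    [/\ 0 <= rpm <= 1, 0 <= r0 <= 1, 0 <= alpha <= 1 &
        unit_equiv B Phi (U_rnu rpm r0 nu1 nu2) (Phi_at alpha theta)].
Proof.
case=> _ [xiR [xiL [zetaL [zetaR [xi1 [xi2 [zeta1 [zeta2 [[hxi hzeta hB] hdef]]]]]]]]].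
have same n : n != 0 ->
    [/\ xiR n = xiR 1, xiL n = xiL 1, zetaL n = zetaL 1 & zetaR n = zetaR 1].
  move=> hn; have [h1 h2 h3 h4] := hdef n hn.
  have [k1 k2 k3 k4] := hdef 1 isT.
  by rewrite h1 h2 h3 h4 k1 k2 k3 k4.
have [ra [ta [tb [tk [hra ea eb ec ed]]]]] := coords (hxi 1) (hzeta 1).
have [ra0 [ta0 [tb0 [tk0 [hra0 ea0 eb0 ec0 ed0]]]]] := coords (hxi 0) (hzeta 0).
move=> /unit_vec_ip hPhi.
have hp : conjc (ip (xiR 0) Phi) * ip (xiR 0) Phi + conjc (ip (xiL 0) Phi) * ip (xiL 0) Phi = 1.
  by rewrite -hPhi (parseval Phi Phi (hxi 0)).
have [rf [tf1 [tf2 [hrf ef1 ef2]]]] := polar2 hp.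
pose lam := tk / 2.
pose P := Pang lam ta tb ta0.
pose Q := Qang lam ta tb ta0.
have Ps n : n + 1 != 0 -> P (n + 1) = P n + (lam - ta) by exact: Pstep.
have P0 : P 0 = tb - ta0 by exact: Pang0.
have Q0 : Q 0 = 0 by exact: Qang0.
have Qn n : n != 0 -> Q n = (ta - tb) + P n by exact: Qangn.
have PM1 : P (-1) = - (lam - ta) - (ta - tb) by exact: Pm1.
have hlam : lam + lam = tk by rewrite /lam; field.
exists ra, ra0, rf, (tb0 - tb), (tk0 - tk + tb - tb0), (- P 0 - tf1 + tf2).
split => //.
exists lam, (- P 0 - tf1), (fun n => Wmat (expi (P n)) (expi (Q n)) (xiR n) (xiL n)).
split; [|split].
- by move=> n; apply: Wmat_unitary; rewrite ?expi_conj_mul.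
- move=> n m; rewrite hB.
  have [hx1 hx2 hx12] := onb2_ip (hxi n).
  have hx21 : ip (xiL n) (xiR n) = 0 by rewrite -ip_conj hx12 conjc0.
  case: (eqVneq m (n + 1)) => hm.
  + subst m.
    have -> : (n + 1 == n - 1) = false by apply/eqP; lia.
    rewrite addr0 (U_up _ _ _ _ (erefl (n + 1))) ketbra_conj !Wmat_mul hx1 hx21 mulr1 mulr0 e1E.
    case: (eqVneq (n + 1) 0) => hn1.
    * have hn : n = -1 by lia.
      rewrite hn1 zL0 ea0 eb0; apply: ketbra_up_eq.
      -- rewrite comb_up; apply: ang0.
         rewrite hn P0 PM1; ring.
      -- rewrite comb_up Q0.
         by rewrite hn PM1 /=; congr (expi _ * _); ring.
    * have [_ _ h3 _] := same _ hn1.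
      have [h1' h2' _ _] := same _ hn1.
      rewrite (zLn _ _ _ hn1) h1' h2' h3 ea eb; apply: ketbra_up_eq.
      -- rewrite comb_up; apply: ang0. rewrite Ps //; ring.
      -- rewrite comb_up; apply: ang0. rewrite Qn // Ps //; ring.
  + rewrite /= add0r.
    case: (eqVneq m (n - 1)) => hm'.
    * subst m.
      rewrite (U_dn _ _ _ _ (erefl (n - 1))) ketbra_conj !Wmat_mul hx12 hx2 mulr1 mulr0 e2E.
      case: (eqVneq n 0) => hn0.
      -- have hn1 : n - 1 != 0 by rewrite hn0.
         have [h1' h2' _ h4] := same _ hn1.
         rewrite (zRn _ _ _ _ hn1) h1' h2' h4 ec ed; apply: ketbra_dn_eq.
         ++ rewrite comb_c; congr (- _); apply: ang0.
            rewrite hn0 Q0 sub0r PM1 -hlam; ring.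
         ++ rewrite comb_d; apply: ang0.
            rewrite hn0 Q0 sub0r (Qn (-1)) // PM1 -hlam; ring.
      have eP : P n = P (n - 1) + (lam - ta).
        by rewrite -{1}(subrK 1 n) Ps // subrK.
      case: (eqVneq (n - 1) 0) => hn1.
      -- have hn : n = 1 by lia.
         rewrite hn1 zR0 ec0 ed0; apply: ketbra_dn_eq.
         ++ rewrite comb_c; congr (- (expi _ * _)).
            rewrite (Qn _ hn0) eP hn1 P0 -hlam; ring.
         ++ rewrite comb_d Q0; congr (expi _ * _).
            rewrite (Qn _ hn0) eP hn1 P0 -hlam; ring.
      -- have [h1' h2' _ h4] := same _ hn1.
         rewrite (zRn _ _ _ _ hn1) h1' h2' h4 ec ed; apply: ketbra_dn_eq.
         ++ rewrite comb_c; congr (- _); apply: ang0.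
            rewrite (Qn _ hn0) eP -hlam; ring.
         ++ rewrite comb_d; apply: ang0.
            rewrite (Qn _ hn0) (Qn _ hn1) eP -hlam; ring.
    * rewrite /= mulmx0 mul0mx scaler0 /U_rnu (negbTE hm) (negbTE hm').
      by rewrite addr0.
- rewrite Wmat_mul ef1 ef2 /Phi_at e1E e2E !cv2_scale cv2_add Q0.
  rewrite !mulr0 !mulr1 addr0 add0r; congr cv2.
  + rewrite [LHS](_ : _ = (expi (P 0) * expi (- P 0)) * (expi tf1 * expi (- tf1)) * rc rf).
      by rewrite !expiN_mul !mul1r.
    by rewrite !expiD; ring.
  + by rewrite expi0 mul1r !expiD; ring.
Qed.

End Exist3.

Theorem corollary3p4 (R : realType) :
  (forall (B : op R) (Phi : vec R),
     one_defect_qw B -> init_state Phi ->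
     exists rpm r0 alpha nu1 nu2 theta : R,
       [/\ 0 <= rpm <= 1, 0 <= r0 <= 1, 0 <= alpha <= 1 &
           unit_equiv B Phi (U_rnu rpm r0 nu1 nu2) (Phi_at alpha theta)]) /\
  (forall rpm r0 nu1 nu2 alpha theta rpm' r0' nu1' nu2' alpha' theta' : R,
     0 < rpm < 1 -> 0 < r0 < 1 -> 0 < alpha < 1 ->
     0 < rpm' < 1 -> 0 < r0' < 1 -> 0 < alpha' < 1 ->
     0 <= nu1 < 2 * pi -> 0 <= nu2 < 2 * pi -> 0 <= theta < 2 * pi ->
     0 <= nu1' < 2 * pi -> 0 <= nu2' < 2 * pi -> 0 <= theta' < 2 * pi ->
     (unit_equiv (U_rnu rpm r0 nu1 nu2) (Phi_at alpha theta)
                 (U_rnu rpm' r0' nu1' nu2') (Phi_at alpha' theta') <->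
      [/\ rpm = rpm', r0 = r0', nu1 = nu1', nu2 = nu2' &
          (alpha = alpha' /\ theta = theta')])).
Proof.
split; first exact: exist_dir.
move=> rpm r0 nu1 nu2 alpha theta rpm' r0' nu1' nu2' alpha' theta'
  h1 h2 h3 h4 h5 h6 h7 h8 h9 h10 h11 h12; split.
- exact: uniq_dir.
- by case=> -> -> -> -> [-> ->]; exact: uniq_rev.
Qed.
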